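(* Let $d\ge1$ and let $\Sigma$ be a $d$-dimensional pseudomanifold such that $\tilde H_{d-1}(\Sigma;\mathbb{Z})=0$. Then $K_{d-1}(\Sigma)$ is a cyclic group; more precisely, for any facet $\sigma$ of $\Sigma$, the class of $\partial_d\sigma$ generates $K_{d-1}(\Sigma)$.
   Context: A $d$-dimensional pseudomanifold is a pure $d$-dimensional simplicial complex in which every $(d-1)$-dimensional face (ridge) is contained in at most two $d$-dimensional faces (facets), and which is strongly connected: for any two facets $\sigma,\sigma'$ there is a sequence of facets $\sigma=\sigma_0,\dots,\sigma_k=\sigma'$ with $\sigma_j$ and $\sigma_{j+1}$ sharing a ridge. $C_i(\Sigma;\mathbb{Z})$ is free abelian on the (fixed-orientation) $i$-faces, $\partial_i$ the simplicial boundary map, $\partial^*_i$ its transpose, $\tilde H$ reduced homology. The critical group is $K_i(\Sigma)=\ker\partial_i/\operatorname{im}(\partial_{i+1}\partial^*_{i+1})$. *)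

(* Defs.v *)
From HB Require Import structures.
From mathcomp Require Import all_boot all_order all_algebra.
Set Implicit Arguments. Unset Strict Implicit. Unset Printing Implicit Defensive.
Import Order.TTheory GRing.Theory Num.Theory.
Local Open Scope ring_scope.

(* A face of dimension i is a set of size i+1; the
   empty face (dimension -1) gives the augmentation, i.e. reduced chains. *)
Definition is_complex (n : nat) (D : {set {set 'I_n}}) : Prop :=
  forall s t : {set 'I_n}, s \in D -> t \subset s -> t \in D.

Definition is_facet (n d : nat) (D : {set {set 'I_n}}) (s : {set 'I_n}) : bool :=
  (s \in D) && (#|s| == d.+1)%N.

Definition is_pseudomanifold (n d : nat) (D : {set {set 'I_n}}) : Prop :=
  [/\ is_complex D,
      (exists s, is_facet d D s),
      (forall s, s \in D -> exists2 f, is_facet d D f & s \subset f),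
      (forall r, r \in D -> #|r| = d ->
          (#|[set f | is_facet d D f & r \subset f]| <= 2)%N) &
      (forall s s', is_facet d D s -> is_facet d D s' ->
         exists p : seq {set 'I_n},
           [/\ all (is_facet d D) p,
               path (fun a b => #|a :&: b| == d)%N s p & last s p = s'])].

Definition chain (n : nat) := {set 'I_n} -> int.

(* c is a chain of C_{k-1}(D), i.e. supported on the faces of size k *)
Definition is_chain (n : nat) (D : {set {set 'I_n}}) (k : nat) (c : chain n) : Prop :=
  forall s, c s != 0 -> s \in D /\ #|s| = k.

(* orientation sign of removing vertex v from face s (vertices ordered by
   their labels): (-1)^(position of v in s) *)
Definition ssign (n : nat) (s : {set 'I_n}) (v : 'I_n) : int :=
  (-1) ^+ #|[set u in s | (u < v)%N]|.

Definition bd (n : nat) (c : chain n) : chain n :=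
  fun t => \sum_(v : 'I_n | v \notin t) ssign (v |: t) v * c (v |: t).

(* transpose of the boundary C_k -> C_{k-1}, landing in chains on the
   faces of size k of D *)
Definition cobd (n : nat) (D : {set {set 'I_n}}) (k : nat) (c : chain n) : chain n :=
  fun s => if (s \in D) && (#|s| == k)%N
           then \sum_(v in s) ssign s v * c (s :\ v) else 0.

Definition elem (n : nat) (s : {set 'I_n}) : chain n := fun t => (t == s)%:Z.

Definition reduced_homology_vanishes (n : nat) (D : {set {set 'I_n}}) (k : nat) : Prop :=
  forall c, is_chain D k c -> (forall t, bd c t = 0) ->
    exists2 b, is_chain D k.+1 b & forall t, bd b t = c t.

(* Main.v *)
Require Import Defs.
From HB Require Import structures.
From mathcomp Require Import all_boot all_order all_algebra.
Import GRing.Theory.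
Local Open Scope ring_scope.

Set Implicit Arguments.
Section Aux.
Variables (n d : nat) (D : {set {set 'I_n}}) (sigma : {set 'I_n}).

Definition PP (c : chain n) : Prop :=
  exists (m : int) (z : chain n), is_chain D d z /\
    forall t, c t = m * elem sigma t + cobd D d.+1 z t.

Lemma PP_ext c c' : PP c -> (forall t, c t = c' t) -> PP c'.
Proof. by move=> [m [z [Hz H]]] E; exists m, z; split => // t; rewrite -E. Qed.

Lemma cobd_lin k (a b : int) z1 z2 s :
  cobd D k (fun t => a * z1 t + b * z2 t) s = a * cobd D k z1 s + b * cobd D k z2 s.
Proof.
rewrite /cobd; case: ifP => _; last by rewrite !mulr0 addr0.
rewrite !mulr_sumr -big_split /=; apply: eq_bigr => v _.
by rewrite mulrDr !mulrA [_ * a]mulrC [_ * b]mulrC.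
Qed.

Lemma PP_lin (a b : int) c1 c2 : PP c1 -> PP c2 -> PP (fun t => a * c1 t + b * c2 t).
Proof.
move=> [m1 [z1 [H1 E1]]] [m2 [z2 [H2 E2]]].
exists (a * m1 + b * m2), (fun t => a * z1 t + b * z2 t); split.
  move=> s; case: (eqVneq (z1 s) 0) => [e1|/H1 //].
  case: (eqVneq (z2 s) 0) => [e2|/H2 //].
  by rewrite e1 e2 !mulr0 addr0 eqxx.
move=> t; rewrite cobd_lin E1 E2.
rewrite !mulrDr !mulrA mulrDl.
by rewrite -!addrA; congr (_ + _); rewrite !addrA; congr (_ + _); rewrite addrC.
Qed.

Lemma PP0 : PP (fun _ => 0).
Proof.
exists 0, (fun _ => 0); split; first by move=> s; rewrite eqxx.
move=> t; rewrite mul0r add0r /cobd; case: ifP => // _.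
by rewrite big1 // => v _; rewrite mulr0.
Qed.

Lemma sign_sq (s : {set 'I_n}) v : ssign s v * ssign s v = 1.
Proof. by by rewrite /ssign -exprD -signr_odd oddD addbb. Qed.


Lemma sum_in (r s : {set 'I_n}) : r \subset s -> #|s| = #|r|.+1 ->
  exists u, \sum_(v in s) ssign s v * elem r (s :\ v) = ssign s u.
Proof.
move=> rs cs.
have : (s :\: r != set0).
  apply/eqP => E; move: (cardsD s r); rewrite E cards0.
  by rewrite (setIidPr rs) cs subSnn.
case/set0Pn => u; rewrite inE => /andP [ur us].
exists u; rewrite (bigD1 u) //= big1 ?addr0.
  rewrite /elem.
  have -> : s :\ u = r.
    apply/eqP; rewrite eq_sym eqEcard; apply/andP; split.
      apply/subsetP => w wr; rewrite !inE (subsetP rs w wr) andbT.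
      by apply/eqP => E; rewrite -E wr in ur.
    by move: (cardsD1 u s); rewrite us cs add1n => -[<-].
  by rewrite eqxx mulr1.
move=> v /andP [vs vu]; rewrite /elem.
have -> : (s :\ v == r) = false.
  apply/negbTE/eqP => E; move: ur; rewrite -E !inE eq_sym vu us.
  by [].
by rewrite mulr0.
Qed.

Lemma sum_out (r s : {set 'I_n}) : ~~ (r \subset s) ->
  \sum_(v in s) ssign s v * elem r (s :\ v) = 0.
Proof.
move=> nrs; apply: big1 => v vs; rewrite /elem.
have -> : (s :\ v == r) = false.
  apply/negbTE/eqP => E; move: nrs; rewrite -E.
  by rewrite subsetDl.
by rewrite mulr0.
Qed.

Hypothesis HPM : is_pseudomanifold d D.

Lemma step g g' : is_facet d D g -> is_facet d D g' -> #|g :&: g'| = d ->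
  PP (elem g) -> PP (elem g').
Proof.
case: HPM => Hcx _ _ H2 _.
move=> fg fg' cI Pg.
set r := g :&: g'.
have rD : r \in D by apply: (Hcx g); [case/andP: fg|exact: subsetIl].
have gg' : g != g'.
  apply/eqP => E; move: cI; rewrite /r -E setIid.
  case/andP: fg => _ /eqP ->. by move=> /esym /n_Sn.
set c := cobd D d.+1 (elem r).
have Pc : PP c.
  exists 0, (elem r); split.
    move=> s; rewrite /elem; case: (eqVneq s r) => [-> _|]; [by split|by []].
  by move=> t; rewrite mul0r add0r.
have cfac h : is_facet d D h -> r \subset h -> c h * c h = 1.
  move=> /andP [hD /eqP ch] rh.
  have [u Hu] := @sum_in r h rh (etrans ch (congr1 S (esym cI))).
  by rewrite /c /cobd hD ch eqxx /= Hu sign_sq.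
have cg : c g * c g = 1 by apply: cfac => //; exact: subsetIl.
have cg' : c g' * c g' = 1 by apply: cfac => //; exact: subsetIr.
have c0 t : t != g -> t != g' -> c t = 0.
  move=> tg tg'; rewrite /c /cobd.
  case: ifP => // /andP [tD /eqP ct].
  case: (boolP (r \subset t)) => rt; last exact: sum_out.
  exfalso.
  have := H2 r rD cI.
  have sub : [set g; g'; t] \subset [set f | is_facet d D f & r \subset f].
    apply/subsetP => w; rewrite !inE => /orP [/orP [] /eqP ->|/eqP ->].
    - by rewrite fg subsetIl.
    - by rewrite fg' subsetIr.
    - by rewrite /is_facet tD ct eqxx rt.
  move/(leq_trans (subset_leq_card sub)).
  rewrite -setUA !cardsU1 !inE negb_or gg' eq_sym tg /= eq_sym tg' cards1.
  by [].
apply: (@PP_ext _ _ (PP_lin (c g') (- (c g' * c g)) Pc Pg)) => t.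
rewrite /elem.
case: (eqVneq t g') => [->|tg'].
  by rewrite eq_sym (negbTE gg') mulr0 addr0 cg'.
case: (eqVneq t g) => [->|tg].
  by rewrite mulr1 addrN.
by rewrite (c0 t) // mulr0 add0r; exact: mulr0.
Qed.

Lemma path_PP s p : all (is_facet d D) p -> is_facet d D s ->
  path (fun a b => #|a :&: b| == d)%N s p -> PP (elem s) -> PP (elem (last s p)).
Proof.
elim: p s => [|a p IH] s //= /andP [fa fp] fs /andP [/eqP sa pp] Ps.
apply: IH => //; exact: step fs fa sa Ps.
Qed.

End Aux.

Theorem mainTheorem10 (n d : nat) (D : {set {set 'I_n}}) :
  (1 <= d)%N ->
  is_pseudomanifold d D ->
  reduced_homology_vanishes D d ->
  forall sigma : {set 'I_n}, is_facet d D sigma ->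
  forall x : chain n, is_chain D d x -> (forall t, bd x t = 0) ->
  exists (m : int) (z : chain n),
    is_chain D d z /\
    forall t, x t = m * bd (elem sigma) t + bd (cobd D d.+1 z) t.
Proof.
move=> _ HPM Hhom sigma fs x Hx Hbx.
have [b Hb Eb] := Hhom x Hx Hbx.
have Psig : PP d D sigma (elem sigma).
  exists 1, (fun _ => 0); split; first by move=> s; rewrite eqxx.
  move=> t; rewrite mul1r /cobd; case: ifP => _; last by rewrite addr0.
  by rewrite big1 ?addr0 // => v _; rewrite mulr0.
have Pf f : is_facet d D f -> PP d D sigma (elem f).
  move=> ff; have HPM2 := HPM; case: HPM => _ _ _ _ Hcon.
  have [p [ap pp lp]] := Hcon sigma f fs ff.
  rewrite -lp; exact: (@path_PP n d D sigma HPM2).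
set F := [set s | is_facet d D s].
have Pl (l : seq {set 'I_n}) : all (is_facet d D) l ->
    PP d D sigma (fun t => \sum_(s <- l) b s * elem s t).
  elim: l => [|a l IH] /=.
    move=> _; apply: (@PP_ext _ _ _ _ _ _ (@PP0 n d D sigma)) => t; by rewrite big_nil.
  case/andP => fa fl.
  apply: (@PP_ext _ _ _ _ _ _ (PP_lin (b a) 1 (Pf a fa) (IH fl))) => t.
  by rewrite big_cons mul1r.
have Pb : PP d D sigma b.
  apply: (@PP_ext _ _ _ _ _ _ (Pl (enum F) _)).
    by apply/allP => s; rewrite mem_enum inE.
  move=> t; rewrite big_enum /=.
  case: (boolP (t \in F)) => tF.
    rewrite (bigD1 t) //= big1 ?addr0.
      by rewrite /elem eqxx mulr1.
    by move=> s /andP [_ st]; rewrite /elem eq_sym (negbTE st) mulr0.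
  rewrite big1.
    apply/esym/eqP; apply/negP => /negP /Hb [tD ct].
    by move: tF; rewrite inE /is_facet tD ct eqxx.
  move=> s sF; rewrite /elem; case: (eqVneq t s) => [E|ne].
    by rewrite E sF in tF.
  by rewrite mulr0.
have [m [z [Hz Ez]]] := Pb.
exists m, z; split => // t.
rewrite -Eb /bd mulr_sumr -big_split /=; apply: eq_bigr => v _.
by rewrite Ez mulrDr mulrCA.
Qed.
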